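(* Let $y,l,u\in\mathcal{R}(\mathbb{R}^{+},\mathbb{R})$ be such that $l\leq u$, $l_0\leq y_0\leq u_0$, and $\inf_{s\leq t}(u_s-l_s)>0$ for every $t\geq 0$. Let $(\xi,\kappa)=RP_l(y)$. Then the function $\Theta^u_l(\xi)$ has bounded variation.
   Context: A function $f:\mathbb{R}^+=[0,\infty)\to\mathbb{R}$ is regulated if it has a left limit $f_{t^-}$ at every $t>0$ and a right limit $f_{t^+}$ at every $t\geq0$; $\mathcal{R}(\mathbb{R}^{+},\mathbb{R})$ is the set of regulated functions. $a\wedge b=\min(a,b)$, $a\vee b=\max(a,b)$, $a^+=a\vee0$. A function has bounded variation if it has finite total variation on every interval $[0,t]$. One-barrier problem $RP_l(y)$ (for $y,l$ regulated with $y_0\geq l_0$): the unique pair $(\xi,\kappa)$ with $\xi=y+\kappa\geq l$, $\kappa$ non-decreasing, right-continuous, $\kappa_0=0$, and $\int_{[0,\infty[}(\xi_s-l_s)\wedge(\xi_{s^+}-l_{s^+})\,d\kappa_s=0$; explicitly $\kappa_t=-\inf_{s\leq t}\big((y_s-l_s)\wedge(y_{s^+}-l_{s^+})\wedge0\big)$. For $f$ regulated: $\Theta^{u}_{l}(f)_t=\sup_{s\leq t}\Big(\big((f_s-u_s)\vee(f_{s^+}-u_{s^+})\big)^+\wedge\inf_{s\leq r\leq t}\big[\big((f_r-l_r)\wedge(f_{r^+}-l_{r^+})\big)\vee(f_r-u_r)\big]\Big)$. *)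

(* Defs.v *)
(* Functions on R^+ = [0,oo) are modelled as
   f : R -> R, only values on [0,oo) are ever used. *)
From HB Require Import structures.
From mathcomp Require Import all_boot all_order all_algebra.
From mathcomp Require Import all_classical all_reals all_analysis.
Set Implicit Arguments. Unset Strict Implicit. Unset Printing Implicit Defensive.
Import Order.TTheory GRing.Theory Num.Theory numFieldNormedType.Exports.
Local Open Scope classical_set_scope.
Local Open Scope ring_scope.

Section Defs.
Variable R : realType.

Definition regulated (f : R -> R) : Prop :=
  (forall t : R, 0 < t -> exists L : R, f x @[x --> t^'-] --> L) /\
  (forall t : R, 0 <= t -> exists L : R, f x @[x --> t^'+] --> L).

Definition rlim (f : R -> R) (t : R) : R := lim (f x @[x --> t^'+]).

Definition RP_kappa (y l : R -> R) (t : R) : R :=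
  - inf [set Num.min (Num.min (y s - l s) (rlim y s - rlim l s)) 0
        | s in `[0, t]].

Definition RP_xi (y l : R -> R) (t : R) : R := y t + RP_kappa y l t.

Definition Theta (u l f : R -> R) (t : R) : R :=
  sup [set Num.min
          (Num.max (Num.max (f s - u s) (rlim f s - rlim u s)) 0)
          (inf [set Num.max
                   (Num.min (f r - l r) (rlim f r - rlim l r)) (f r - u r)
               | r in `[s, t]])
      | s in `[0, t]].

Definition has_BV (f : R -> R) : Prop :=
  forall t : R, 0 <= t -> bounded_variation 0 t f.

End Defs.

(* Main.v *)
Require Import Defs.
From HB Require Import structures.
From mathcomp Require Import all_boot all_order all_algebra.
From mathcomp Require Import all_classical all_reals all_analysis.
From mathcomp Require Import lra.
Import Order.TTheory GRing.Theory Num.Theory numFieldNormedType.Exports.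
Local Open Scope classical_set_scope.
Local Open Scope ring_scope.

Section Gen.
Context {R : realType}.
Implicit Types (A : set R) (g : R -> R).

Lemma near_right {x : R} {P : R -> Prop} : (\forall z \near x^'+, P z) ->
  exists2 d : R, 0 < d & forall z, x < z < x + d -> P z.
Proof.
move=> /nbhs_ballP [d d0 H]; exists d => // z /andP[xz zd]; apply: H => //.
rewrite /ball /= ltr_distlC; apply/andP; split => //; lra.
Qed.

Lemma near_left {x : R} {P : R -> Prop} : (\forall z \near x^'-, P z) ->
  exists2 d : R, 0 < d & forall z, x - d < z < x -> P z.
Proof.
move=> /nbhs_ballP [d d0 H]; exists d => // z /andP[xz zd]; apply: H => //.
rewrite /ball /= ltr_distlC; apply/andP; split => //; lra.
Qed.

Lemma cvg_right_eps {g : R -> R} {x L : R} : g z @[z --> x^'+] --> L -> forall e, 0 < e ->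
  exists2 d : R, 0 < d & forall z, x < z < x + d -> `|g z - L| < e.
Proof.
move=> /cvgrPdist_lt H e e0; have [d d0 Hd] := near_right (H e e0).
by exists d => // z /Hd; rewrite distrC.
Qed.

Lemma cvg_left_eps {g : R -> R} {x L : R} : g z @[z --> x^'-] --> L -> forall e, 0 < e ->
  exists2 d : R, 0 < d & forall z, x - d < z < x -> `|g z - L| < e.
Proof.
move=> /cvgrPdist_lt H e e0; have [d d0 Hd] := near_left (H e e0).
by exists d => // z /Hd; rewrite distrC.
Qed.

Lemma inf_img_le A g B x : (forall s, A s -> B <= g s) -> A x ->
  inf [set g s | s in A] <= g x.
Proof.
move=> hB Ax; apply: ge_inf; last by exists x.
by exists B => _ [s As <-]; exact: hB.
Qed.

Lemma inf_img_ge A g B x : A x -> (forall s, A s -> B <= g s) ->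
  B <= inf [set g s | s in A].
Proof.
move=> Ax hB; apply: lb_le_inf; first by exists (g x), x.
by move=> _ [s As <-]; exact: hB.
Qed.

Lemma sup_img_ge A g B x : (forall s, A s -> g s <= B) -> A x ->
  g x <= sup [set g s | s in A].
Proof.
move=> hB Ax; apply: ub_le_sup; last by exists x.
by exists B => _ [s As <-]; exact: hB.
Qed.

Lemma sup_img_le A g B x : A x -> (forall s, A s -> g s <= B) ->
  sup [set g s | s in A] <= B.
Proof.
move=> Ax hB; apply: ge_sup; first by exists (g x), x.
by move=> _ [s As <-]; exact: hB.
Qed.

Lemma sup_img_gt A g c x : A x -> c < sup [set g s | s in A] ->
  exists2 s, A s & c < g s.
Proof.
move=> Ax /sup_gt [|_ [s As <-] cs]; first by exists (g x), x.
by exists s.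
Qed.

Lemma inf_img_lt A g c x : A x -> inf [set g s | s in A] < c ->
  exists2 s, A s & g s < c.
Proof.
move=> Ax /inf_lt [|_ [s As <-] cs]; first by exists (g x), x.
by exists s.
Qed.

Lemma inf_img_mono A A' g B x : A `<=` A' -> A x ->
  (forall s, A' s -> B <= g s) ->
  inf [set g s | s in A'] <= inf [set g s | s in A].
Proof.
move=> AA' Ax hB; apply: lb_le_inf; first by exists (g x), x.
move=> _ [s As <-]; apply: inf_img_le hB _; exact: AA'.
Qed.

Lemma creep (T : R) (Q : R -> Prop) : 0 <= T -> Q 0 ->
  (forall x, 0 <= x <= T -> exists2 e, 0 < e &
      (forall z, x - e < z <= x -> Q z -> Q x) /\
      (Q x -> forall w, x <= w < x + e -> Q w)) ->
  Q T.
Proof.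
move=> T0 Q0 loc.
pose S := [set x | 0 <= x <= T /\ Q x].
have S0 : S 0 by split => //; rewrite lexx.
have ubS : ubound S T by move=> x [/andP[]].
have hs : has_sup S by split; [exists 0 | exists T].
set c := sup S.
have supub : forall x, S x -> x <= c.
  by move=> x Sx; have := @ub_le_sup _ S (ex_intro _ T ubS); apply.
have c0 : 0 <= c by exact: supub.
have cT : c <= T by apply: ge_sup => //; exists 0.
have hc : 0 <= c <= T by rewrite c0 cT.
have [e e0 [L Rt]] := loc c hc.
have Qc : Q c.
  have [z [/andP[z0 zT] Qz] cz] := sup_adherent e0 hs.
  apply: (L z _ Qz); rewrite cz /=.
  by apply: supub; split => //; rewrite z0 zT.
have [cT'|] := ltP c T; last first.
  by move=> Tc; have -> : T = c by apply/eqP; rewrite eq_le Tc cT.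
pose w := Num.min (c + e / 2) T.
have cw : c < w by rewrite /w lt_min cT' andbT; lra.
have Qw : Q w.
  apply: Rt => //; rewrite (ltW cw) /= /w gt_min; apply/orP; left; lra.
have : w <= c.
  apply: supub; split => //.
  by rewrite (le_trans c0 (ltW cw)) /= /w ge_min lexx orbT.
by rewrite leNgt cw.
Qed.


Fixpoint chain (P : R -> R -> Prop) (a : R) (s : seq R) : Prop :=
  if s is b :: s' then a < b /\ P a b /\ chain P b s' else True.

Lemma chain_rcons P a s x : chain P a s -> last a s < x -> P (last a s) x ->
  chain P a (rcons s x).
Proof.
elim: s a => [|b s IH] a /=; first by move=> _ ax Pax; do !split.
by move=> [ab [Pab cs]] lx Px; do !split => //; exact: IH.
Qed.

Lemma chain_ge P a s : chain P a s -> a <= last a s.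
Proof.
elim: s a => [|b s IH] a /=; first by [].
by move=> [ab [_ cs]]; exact: le_trans (ltW ab) (IH _ cs).
Qed.

Lemma partition_exists T P : 0 <= T ->
  (forall a b a' b', a <= a' -> b' <= b -> P a b -> P a' b') ->
  (forall x, 0 <= x <= T -> exists2 e, 0 < e &
     P x (x + e) /\ (0 < x -> P (x - e) x)) ->
  exists s, chain P 0 s /\ last 0 s = T.
Proof.
move=> T0 her loc.
refine (@creep T (fun x => exists s, chain P 0 s /\ last 0 s = x) T0 _ _).
  by exists [::].
move=> x xT; have [e e0 [Pr Pl]] := loc x xT; exists e => //; split.
- move=> z /andP[ez zx] [s [cs ls]].
  have [zx'|xz] := ltP z x; last first.
    have -> : x = z by apply/eqP; rewrite eq_le zx xz.
    by exists s.
  exists (rcons s x); split; last by rewrite last_rcons.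
  have z0 : 0 <= z by rewrite -ls; exact: chain_ge cs.
  apply: chain_rcons => //; rewrite ls //.
  apply: (her (x - e) x) (Pl _) => //; [exact: ltW | exact: le_lt_trans zx'].
- move=> [s [cs ls]] w /andP[xw wx].
  have [xw'|] := ltP x w; last first.
    move=> wx'; have <- : x = w by apply/eqP; rewrite eq_le xw wx'.
    by exists s.
  exists (rcons s w); split; last by rewrite last_rcons.
  apply: chain_rcons => //; rewrite ls //.
  by apply: (her x (x + e)) Pr => //; exact: ltW.
Qed.

Lemma norm_near1 (a L : R) : `|a - L| < 1 -> `|a| <= `|L| + 1.
Proof.
move=> h; rewrite -[a](subrK L); apply: le_trans (ler_normD _ _) _.
by rewrite addrC lerD2l ltW.
Qed.

Lemma reg_bounded g T : 0 <= T -> regulated g ->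
  exists B, forall x, 0 <= x <= T -> `|g x| <= B.
Proof.
move=> T0 [regl regr].
refine (@creep T (fun x => exists B, forall z, 0 <= z <= x -> `|g z| <= B) T0 _ _).
  by exists `|g 0| => z /andP[z0 z0']; have -> : z = 0 by apply/eqP; rewrite eq_le z0 z0'.
move=> x /andP[x0 xT].
have [L' hL'] := regr x x0.
have [d1 d10 H1] := cvg_right_eps hL' _ ltr01.
have [d2 d20 H2] : exists2 d2, 0 < d2 & forall z, x - d2 < z <= x ->
    (exists B, forall w, 0 <= w <= z -> `|g w| <= B) ->
    (exists B, forall w, 0 <= w <= x -> `|g w| <= B).
  have [x0'|] := ltP 0 x; last first.
    move=> x0''; have xe : x = 0 by apply/eqP; rewrite eq_le x0 x0''.
    exists 1 => // z _ _; exists `|g 0| => w /andP[w0 w0'].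
    by have -> : w = 0 by apply/eqP; rewrite eq_le w0 -xe w0'.
  have [L hL] := regl x x0'.
  have [d d0 H] := cvg_left_eps hL _ ltr01.
  exists d => // z /andP[dz zx] [B HB].
  exists (Num.max B (Num.max (`|L| + 1) `|g x|)) => w /andP[w0 wx].
  have [wz|zw] := leP w z.
    by rewrite !le_max HB ?w0.
  have [wx'|xw] := ltP w x.
    rewrite !le_max norm_near1 ?orbT// H//.
    by rewrite wx' andbT; exact: lt_trans dz zw.
  have -> : w = x by apply/eqP; rewrite eq_le wx xw.
  by rewrite !le_max lexx !orbT.
exists (Num.min d1 d2); first by rewrite lt_min d10 d20.
split.
  move=> z /andP[dz zx]; apply: H2; rewrite zx andbT.
  by apply: le_lt_trans dz; rewrite lerD2l lerN2 ge_min lexx orbT.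
move=> [B HB] w /andP[xw wd].
exists (Num.max B (`|L'| + 1)) => v /andP[v0 vw].
have [vx|xv] := leP v x; first by rewrite le_max HB ?v0.
rewrite le_max norm_near1 ?orbT// H1// xv /=.
apply: le_lt_trans vw _; apply: lt_le_trans wd _.
by rewrite lerD2l ge_min lexx.
Qed.


Lemma variation_cons a b (f : R -> R) x s :
  variation a b f (x :: s) = `|f x - f a| + variation x b f s.
Proof. by rewrite /variation /= big_nat_recl. Qed.

Lemma variation_rcons a b (f : R -> R) s z :
  variation a b f (rcons s z) = variation a b f s + `|f z - f (last a s)|.
Proof.
elim: s a => [|x s IH] a /=.
  by rewrite variation_cons !variation_nil add0r addr0.
by rewrite !variation_cons IH addrA.
Qed.

Lemma unimodal (F : R -> R) (In : R -> Prop) b :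
  (forall p q r, In p -> In q -> In r -> p < q -> q < r ->
     Num.min (F p) (F r) <= F q) ->
  forall s x K, In x -> (forall z, z \in s -> In z) -> path <%R x s ->
  F x <= K -> (forall z, z \in s -> F z <= K) ->
  variation x b F s <= 2 * K - F x - F (last x s).
Proof.
move=> ndu; elim=> [|y s IH] x K Ix Is ps FxK FsK /=.
  rewrite variation_nil; lra.
rewrite variation_cons.
move: ps => /= /andP[xy ps].
have Iy : In y by apply: Is; rewrite mem_head.
have Is' : forall z, z \in s -> In z by move=> z zs; apply: Is; rewrite inE zs orbT.
have ys : forall z, z \in s -> y < z.
  by move=> z zs; move/allP: (order_path_min lt_trans ps) => /(_ z zs).
have FyK : F y <= K by apply: FsK; rewrite mem_head.
have FsK' : forall z, z \in s -> F z <= K by move=> z zs; apply: FsK; rewrite inE zs orbT.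
case: (leP (F x) (F y)) => Fxy.
  have := IH y K Iy Is' ps FyK FsK'.
  rewrite ger0_norm ?subr_ge0 //; lra.
have Fz : forall z, z \in s -> F z <= F y.
  move=> z zs; have := ndu x y z Ix Iy (Is' z zs) xy (ys z zs).
  by rewrite ge_min leNgt Fxy /=.
have := IH y (F y) Iy Is' ps (lexx _) Fz.
rewrite ltr0_norm ?subr_lt0 //; lra.
Qed.

Lemma path_le_last {x : R} {s} : path <%R x s -> forall w, w \in x :: s -> w <= last x s.
Proof.
elim: s x => [|y s IH] x /=; first by move=> _ w; rewrite inE => /eqP ->.
move=> /andP[xy ps] w; rewrite inE => /orP[/eqP ->|ws].
  by apply: le_trans (ltW xy) (IH y ps y (mem_head _ _)).
exact: IH.
Qed.

Lemma piece_BV (F : R -> R) a b M : a < b ->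
  (forall z, a <= z <= b -> `|F z| <= M) ->
  (forall p q r, a < p -> r < b -> p < q -> q < r ->
     Num.min (F p) (F r) <= F q) ->
  bounded_variation a b F.
Proof.
move=> ab FM ndu.
have M0 : `|F a| <= M by apply: FM; rewrite lexx ltW.
have FM' : forall z, a <= z <= b -> - M <= F z <= M.
  by move=> z zab; rewrite -ler_norml; exact: FM.
exists (8 * M) => _ [s [ps /eqP ls] <-].
have nM : 0 <= M := le_trans (normr_ge0 _) M0.
case: s ps ls => [|x s] ps ls; first by rewrite variation_nil; lra.
rewrite variation_cons.
move: ps => /= /andP[ax ps].
have hx : `|F x - F a| <= 2 * M.
  apply: le_trans (ler_normB _ _) _.
  have : `|F x| <= M.
    apply: FM; rewrite (ltW ax) /=; rewrite -ls.
    exact: path_le_last ps x (mem_head _ _).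
  lra.
case/lastP: s ps ls => [|s' z] ps ls.
  by rewrite variation_nil; lra.
rewrite variation_rcons.
rewrite /= last_rcons in ls; subst z.
move: ps; rewrite rcons_path => /andP[ps lb].
have allx : forall w, w \in x :: s' -> a < w < b.
  move=> w ws; apply/andP; split.
    move: ws; rewrite inE => /orP[/eqP -> //|ws].
    by apply: lt_trans ax _; move/allP: (order_path_min lt_trans ps) => /(_ w ws).
  exact: le_lt_trans (path_le_last ps _ ws) lb.
have Fin : forall w, w \in x :: s' -> - M <= F w <= M.
  by move=> w /allx /andP[aw wb]; apply: FM'; rewrite !ltW.
have Is : forall w, w \in s' -> a < w < b.
  by move=> w ws; apply: allx; rewrite inE ws orbT.
have Fs : forall w, w \in s' -> F w <= M.
  move=> w /Is /andP[aw wb]; have h : a <= w <= b by rewrite !ltW.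
  by case/andP: (FM' w h).
have ndu' : forall p q r, a < p < b -> a < q < b -> a < r < b -> p < q -> q < r ->
    Num.min (F p) (F r) <= F q.
  by move=> p q r /andP[ap _] _ /andP[_ rb]; exact: ndu.
have lin : last x s' \in x :: s' by rewrite mem_last.
move: (Fin _ lin) (Fin x (mem_head _ _)) => /andP[l1 l2] /andP[x1 x2].
have U := @unimodal F (fun w => a < w < b) b ndu' s' x M (allx x (mem_head _ _)) Is ps x2 Fs.
have hb : `|F b - F (last x s')| <= 2 * M.
  apply: le_trans (ler_normB _ _) _.
  have : `|F b| <= M by apply: FM; rewrite lexx ltW.
  have : `|F (last x s')| <= M by rewrite ler_norml l1 l2.
  lra.
lra.
Qed.



Lemma BV_cat {a c b : R} {f : R -> R} : a <= c -> c <= b ->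
  bounded_variation a c f -> bounded_variation c b f -> bounded_variation a b f.
Proof.
move=> ac cb /(bounded_variationP _ ac) h1 /(bounded_variationP _ cb) h2.
apply/bounded_variationP; first exact: le_trans ac cb.
by rewrite (total_variationD _ ac cb) fin_numD h1 h2.
Qed.

Lemma chain_BV P (f : R -> R) s a : chain P a s ->
  (forall a' b', P a' b' -> a' < b' -> a <= a' -> b' <= last a s ->
     bounded_variation a' b' f) ->
  bounded_variation a (last a s) f.
Proof.
elim: s a => [|b s IH] a /=; first by move=> _ _; exact: bounded_variationxx.
move=> [ab [Pab cs]] H.
have bl := @chain_ge P b s cs.
apply: (BV_cat (ltW ab) bl); first by apply: H => //.
apply: IH => // a' b' P' ab' ba' bl'; apply: H => //.
exact: le_trans (ltW ab) ba'.
Qed.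


Lemma rlim_bound (g : R -> R) x B : cvg (g z @[z --> x^'+]) ->
  (forall z, x < z < x + 1 -> `|g z| <= B) -> `|rlim g x| <= B.
Proof.
move=> cg H; rewrite /rlim ler_norml; apply/andP; split.
  apply: limr_ge => //; near=> z.
  have : `|g z| <= B.
    apply: H; apply/andP; split; near: z; [exact: nbhs_right_gt|].
    by apply: nbhs_right_lt; rewrite ltrDl.
  by rewrite ler_norml => /andP[].
apply: limr_le => //; near=> z.
have : `|g z| <= B.
  apply: H; apply/andP; split; near: z; [exact: nbhs_right_gt|].
  by apply: nbhs_right_lt; rewrite ltrDl.
by rewrite ler_norml => /andP[].
Unshelve. all: by end_near.
Qed.

Lemma reg_cvgr g x : regulated g -> 0 <= x -> cvg (g z @[z --> x^'+]).
Proof. by move=> [_ rg] x0; apply/cvg_ex; exact: rg. Qed.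

Lemma reg_cvgl g x : regulated g -> 0 < x -> cvg (g z @[z --> x^'-]).
Proof. by move=> [rg _] x0; apply/cvg_ex; exact: rg. Qed.

Lemma bounded_rlim g T : 0 <= T -> (forall x, 0 <= x -> cvg (g z @[z --> x^'+])) ->
  (exists B, forall x, 0 <= x <= T + 1 -> `|g x| <= B) ->
  exists C, forall x, 0 <= x <= T -> `|g x| <= C /\ `|rlim g x| <= C.
Proof.
move=> T0 cg [B HB]; exists B => x /andP[x0 xT]; split.
  by apply: HB; rewrite x0 /=; lra.
apply: rlim_bound; first exact: cg.
move=> z /andP[xz zx]; apply: HB; apply/andP; split; lra.
Qed.


Lemma reg_bnd g T : regulated g -> 0 <= T ->
  exists C, forall x, 0 <= x <= T -> `|g x| <= C /\ `|rlim g x| <= C.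
Proof.
move=> rg T0; apply: bounded_rlim => //.
  by move=> x x0; exact: reg_cvgr.
by apply: reg_bounded => //; lra.
Qed.

End Gen.

Section Main.
Variables (R : realType) (y l u : R -> R).
Hypotheses (ry : regulated y) (rl : regulated l) (ru : regulated u).

Definition ek (s : R) := Num.min (Num.min (y s - l s) (rlim y s - rlim l s)) 0.
Definition K := RP_kappa y l.
Definition X := RP_xi y l.

Lemma KE t : K t = - inf [set ek s | s in `[0, t]].
Proof. by []. Qed.

Lemma XE t : X t = y t + K t.
Proof. by []. Qed.

Lemma ek_le0 s : ek s <= 0.
Proof. by rewrite /ek ge_min lexx orbT. Qed.

Lemma ek_le s : ek s <= y s - l s.
Proof. by rewrite /ek !ge_min lexx. Qed.

Lemma ek_bnd {T : R} : 0 <= T -> exists C, forall s, 0 <= s <= T -> - C <= ek s.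
Proof.
move=> T0.
have [Cy Hy] := reg_bnd y T ry T0.
have [Cl Hl] := reg_bnd l T rl T0.
exists (2 * Cy + 2 * Cl) => s sT.
have [h1 h2] := Hy s sT; have [h3 h4] := Hl s sT.
move: h1 h2 h3 h4; rewrite !ler_norml => /andP[? ?] /andP[? ?] /andP[? ?] /andP[? ?].
rewrite /ek !le_min; apply/andP; split; first (apply/andP; split); lra.
Qed.

Lemma ek_img_lb {t : R} : 0 <= t -> exists C, forall s, [set` `[0, t]] s -> - C <= ek s.
Proof.
move=> t0; have [C HC] := ek_bnd t0; exists C => s; rewrite /= in_itv /=.
exact: HC.
Qed.

Lemma K_ge {t : R} : 0 <= t -> - ek t <= K t.
Proof.
move=> t0; have [C HC] := ek_img_lb t0.
rewrite KE lerN2; apply: inf_img_le HC _.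
by rewrite /= in_itv /= t0 lexx.
Qed.

Lemma K_ge0 {t : R} : 0 <= t -> 0 <= K t.
Proof. by move=> t0; apply: le_trans (K_ge t0); rewrite oppr_ge0 ek_le0. Qed.

Lemma K_mono {s t : R} : 0 <= s -> s <= t -> K s <= K t.
Proof.
move=> s0 st; have t0 := le_trans s0 st.
have [C HC] := ek_img_lb t0.
rewrite !KE lerN2; apply: (@inf_img_mono _ _ _ _ _ 0) HC.
- by move=> z; rewrite /= !in_itv /= => /andP[-> zs]; exact: le_trans zs st.
- by rewrite /= in_itv /= s0 lexx.
Qed.

Lemma Xl_ge0 {t : R} : 0 <= t -> 0 <= X t - l t.
Proof.
move=> t0; rewrite XE; have := K_ge t0; have := ek_le t; lra.
Qed.

Lemma K_bnd {T : R} : 0 <= T -> exists C, forall t, 0 <= t <= T -> 0 <= K t <= C.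
Proof.
move=> T0; have [C HC] := ek_img_lb T0; exists C => t /andP[t0 tT].
rewrite K_ge0 //=; apply: le_trans (K_mono t0 tT) _.
rewrite KE lerNl; apply: (@inf_img_ge _ _ _ _ 0) HC.
by rewrite /= in_itv /= lexx.
Qed.


Lemma K_cvgr {x : R} : 0 <= x -> cvg (K z @[z --> x^'+]).
Proof.
move=> x0; apply: nondecreasing_at_right_is_cvgr.
  near=> b; move=> p q; rewrite !in_itv /= => /andP[xp _] /andP[xq _] pq.
  by apply: K_mono => //; exact: le_trans x0 (ltW xp).
near=> b; exists 0 => w [z]; rewrite /= in_itv /= => /andP[xz _] <-.
by apply: K_ge0; exact: le_trans x0 (ltW xz).
Unshelve. all: by end_near.
Qed.

Lemma K_cvgl {x : R} : 0 < x -> cvg (K z @[z --> x^'-]).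
Proof.
move=> x0; apply: nondecreasing_at_left_is_cvgr.
  near=> b; move=> p q; rewrite !in_itv /= => /andP[bp _] /andP[bq _] pq.
  apply: K_mono => //; apply: le_trans (ltW bp); apply: ltW.
  by near: b; exact: nbhs_left_gt.
near=> b; exists (K x) => w [z]; rewrite /= in_itv /= => /andP[bz zx] <-.
apply: K_mono (ltW zx); apply: le_trans (ltW bz); apply: ltW.
by near: b; exact: nbhs_left_gt.
Unshelve. all: by end_near.
Qed.

Lemma X_cvgr {x : R} : 0 <= x -> cvg (X z @[z --> x^'+]).
Proof. by move=> x0; apply: is_cvgD; [exact: reg_cvgr | exact: K_cvgr]. Qed.

Lemma X_cvgl {x : R} : 0 < x -> cvg (X z @[z --> x^'-]).
Proof. by move=> x0; apply: is_cvgD; [exact: reg_cvgl | exact: K_cvgl]. Qed.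

Definition h (t : R) := X t - l t.

Lemma h_cvgr {x : R} : 0 <= x -> cvg (h z @[z --> x^'+]).
Proof. by move=> x0; apply: is_cvgB; [exact: X_cvgr | exact: reg_cvgr]. Qed.

Lemma h_cvgl {x : R} : 0 < x -> cvg (h z @[z --> x^'-]).
Proof. by move=> x0; apply: is_cvgB; [exact: X_cvgl | exact: reg_cvgl]. Qed.

Definition hr (x : R) := lim (h z @[z --> x^'+]).

Lemma hrE {x : R} : 0 <= x -> rlim X x - rlim l x = hr x.
Proof.
move=> x0; rewrite /hr /rlim /h.
by rewrite -limB //; [exact: X_cvgr | exact: reg_cvgr].
Qed.

Lemma hr_ge0 {x : R} : 0 <= x -> 0 <= hr x.
Proof.
move=> x0; apply: limr_ge; first exact: h_cvgr.
near=> z; apply: Xl_ge0; apply: le_trans x0 (ltW _).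
by near: z; exact: nbhs_right_gt.
Unshelve. all: by end_near.
Qed.

Lemma XuE {x : R} : 0 <= x ->
  rlim X x - rlim u x = hr x - lim ((u z - l z) @[z --> x^'+]).
Proof.
move=> x0; rewrite -hrE // /rlim.
rewrite (limB (f := u) (g := l)); [|exact: reg_cvgr..].
by rewrite opprB addrA subrK.
Qed.


Lemma min_bnd (a b c d : R) : c <= a <= d -> c <= b <= d -> c <= Num.min a b <= d.
Proof.
move=> /andP[ca ad] /andP[cb bd]; rewrite le_min ca cb /= ge_min ad //.
Qed.

Lemma max_bnd (a b c d : R) : c <= a <= d -> c <= b <= d -> c <= Num.max a b <= d.
Proof.
move=> /andP[ca ad] /andP[cb bd]; rewrite ge_max ad bd andbT le_max ca //.
Qed.

Hypothesis lu : forall t, 0 <= t -> l t <= u t.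
Variable T : R.
Hypothesis T0 : 0 < T.
Hypothesis dpos : 0 < inf [set u s - l s | s in `[0, T]].

Definition del := inf [set u s - l s | s in `[0, T]].

Lemma del_le {s : R} : 0 <= s <= T -> del <= u s - l s.
Proof.
move=> sT; apply: (@inf_img_le _ _ _ 0) => [z|]; last by rewrite /= in_itv.
by rewrite /= in_itv /= => /andP[z0 _]; rewrite subr_ge0 lu.
Qed.

Lemma big_bnd : exists C, forall s, 0 <= s <= T ->
  `|X s| <= C /\ `|rlim X s| <= C /\ `|l s| <= C /\ `|rlim l s| <= C /\
      `|u s| <= C /\ `|rlim u s| <= C.
Proof.
have T1 : 0 <= T + 1 by rewrite addr_ge0 // ltW.
have [Cy Hy] := reg_bnd y (T + 1) ry T1.
have [Ck Hk] := @K_bnd (T + 1) T1.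
have HX : forall z, 0 <= z <= T + 1 -> `|X z| <= Cy + Ck.
  move=> z zT; rewrite XE; apply: le_trans (ler_normD _ _) _.
  have [h1 _] := Hy z zT; have /andP[k1 k2] := Hk z zT.
  by rewrite (ger0_norm k1); apply: lerD.
have [Cl Hl] := reg_bnd l T (rl) (ltW T0).
have [Cu Hu] := reg_bnd u T (ru) (ltW T0).
have HrX : forall s, 0 <= s <= T -> `|rlim X s| <= Cy + Ck.
  move=> s /andP[s0 sT]; apply: rlim_bound; first exact: X_cvgr.
  move=> z /andP[sz zs]; apply: HX; apply/andP; split; lra.
exists (Num.max (Cy + Ck) (Num.max Cl Cu)) => s sT.
have [l1 l2] := Hl s sT; have [u1 u2] := Hu s sT.
have x1 : `|X s| <= Cy + Ck by apply: HX; move: sT => /andP[? ?]; apply/andP; split; lra.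
have x2 := HrX s sT.
by do !split; rewrite !le_max ?x1 ?x2 ?l1 ?l2 ?u1 ?u2 ?orbT.
Qed.

Definition A (s : R) := Num.max (Num.max (X s - u s) (rlim X s - rlim u s)) 0.
Definition G (r : R) := Num.max (Num.min (X r - l r) (rlim X r - rlim l r)) (X r - u r).
Definition m (s t : R) := inf [set G r | r in `[s, t]].
Definition phi (s t : R) := Num.min (A s) (m s t).
Definition Th := Theta u l X.

Lemma ThE t : Th t = sup [set phi s t | s in `[0, t]].
Proof. by []. Qed.


Section Bnd.
Variable C : R.
Hypothesis HC : forall s, 0 <= s <= T ->
  `|X s| <= C /\ `|rlim X s| <= C /\ `|l s| <= C /\ `|rlim l s| <= C /\
      `|u s| <= C /\ `|rlim u s| <= C.

Lemma HC' {s : R} : 0 <= s <= T ->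
  [/\ - C <= X s <= C, - C <= rlim X s <= C, - C <= l s <= C &
   [/\ - C <= rlim l s <= C, - C <= u s <= C & - C <= rlim u s <= C]].
Proof.
by move=> /HC [h1 [h2 [h3 [h4 [h5 h6]]]]]; move: h1 h2 h3 h4 h5 h6; rewrite -!ler_norml.
Qed.

Lemma G_bnd {r : R} : 0 <= r <= T -> - (2 * C) <= G r <= 2 * C.
Proof.
move=> /HC' [/andP[? ?] /andP[? ?] /andP[? ?] [/andP[? ?] /andP[? ?] /andP[? ?]]].
rewrite /G; apply: max_bnd; first apply: min_bnd.
all: apply/andP; split; lra.
Qed.

Lemma C_ge0 : 0 <= C.
Proof.
have h0 : (0:R) <= 0 <= T by apply/andP; split => //; exact: ltW.
by have [h _] := HC 0 h0; exact: le_trans (normr_ge0 _) h.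
Qed.

Lemma G_lb {r : R} : 0 <= r <= T -> - (2 * C) <= G r.
Proof. by move=> /G_bnd /andP[]. Qed.

Lemma A_ge0 {s : R} : 0 <= A s.
Proof. by rewrite /A le_max lexx orbT. Qed.

Lemma A_le {s : R} : 0 <= s <= T -> A s <= 2 * C.
Proof.
move=> /HC' [/andP[? ?] /andP[? ?] /andP[? ?] [/andP[? ?] /andP[? ?] /andP[? ?]]].
rewrite /A !ge_max; apply/andP; split; first (apply/andP; split); lra.
Qed.

Lemma m_ge {s t : R} : 0 <= s <= t -> t <= T -> - (2 * C) <= m s t.
Proof.
move=> /andP[s0 st] tT; apply: (@inf_img_ge _ _ _ _ s).
  by rewrite /= in_itv /= lexx st.
move=> r; rewrite /= in_itv /= => /andP[sr rt]; apply: G_lb.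
by rewrite (le_trans s0 sr) (le_trans rt tT).
Qed.

Lemma m_le {s t r : R} : 0 <= s -> t <= T -> s <= r <= t -> m s t <= G r.
Proof.
move=> s0 tT srt; apply: (@inf_img_le _ _ _ (- (2 * C))); last by rewrite /= in_itv.
move=> z; rewrite /= in_itv /= => /andP[sz zt]; apply: G_lb.
by rewrite (le_trans s0 sz) (le_trans zt tT).
Qed.

Lemma m_mono {s t t' : R} : 0 <= s <= t -> t <= t' -> t' <= T -> m s t' <= m s t.
Proof.
move=> /andP[s0 st] tt' t'T; apply: (@inf_img_mono _ _ _ _ (- (2 * C)) s).
- by move=> z; rewrite /= !in_itv /= => /andP[-> zt]; exact: le_trans zt tt'.
- by rewrite /= in_itv /= lexx st.
- move=> z; rewrite /= in_itv /= => /andP[sz zt]; apply: G_lb.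
  by rewrite (le_trans s0 sz) (le_trans zt t'T).
Qed.

Lemma phi_le {s t : R} : 0 <= s <= T -> phi s t <= 2 * C.
Proof. by move=> sT; rewrite /phi ge_min A_le. Qed.

Lemma phi_ge {s t : R} : 0 <= s <= t -> t <= T -> - (2 * C) <= phi s t.
Proof.
move=> st tT; rewrite /phi le_min m_ge // andbT.
have := @A_ge0 s; have := m_ge st tT.
have := C_ge0; lra.
Qed.


Lemma Th_ge {s t : R} : 0 <= s <= t -> t <= T -> phi s t <= Th t.
Proof.
move=> /andP[s0 st] tT; rewrite ThE; apply: (@sup_img_ge _ _ (fun z => phi z t) (2 * C) s).
  move=> z; rewrite /= in_itv /= => /andP[z0 zt]; apply: phi_le.
  by rewrite z0 (le_trans zt tT).
by rewrite /= in_itv /= s0 st.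
Qed.

Lemma Th_le {t : R} : 0 <= t -> t <= T -> Th t <= 2 * C.
Proof.
move=> t0 tT; rewrite ThE; apply: (@sup_img_le _ _ _ _ 0).
  by rewrite /= in_itv /= lexx t0.
move=> z; rewrite /= in_itv /= => /andP[z0 zt]; apply: phi_le.
by rewrite z0 (le_trans zt tT).
Qed.

Lemma Th_gt {t c : R} : 0 <= t -> c < Th t -> exists2 s, 0 <= s <= t & c < phi s t.
Proof.
move=> t0; rewrite ThE => ct.
have h0 : [set` `[0, t]] 0 by rewrite /= in_itv /= lexx t0.
have [s] := @sup_img_gt _ _ (fun z => phi z t) c 0 h0 ct.
by rewrite /= in_itv /= => sin cs; exists s.
Qed.

Lemma G_ge0 {r : R} : 0 <= r -> 0 <= G r.
Proof.
move=> r0; rewrite /G le_max le_min hrE // Xl_ge0 // hr_ge0 //.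
Qed.

Lemma m_ge0 {s t : R} : 0 <= s <= t -> 0 <= m s t.
Proof.
move=> /andP[s0 st]; apply: (@inf_img_ge _ _ _ _ s).
  by rewrite /= in_itv /= lexx st.
move=> r; rewrite /= in_itv /= => /andP[sr _]; apply: G_ge0.
exact: le_trans s0 sr.
Qed.

Lemma Th_ge0 {t : R} : 0 <= t -> t <= T -> 0 <= Th t.
Proof.
move=> t0 tT; apply: le_trans (@Th_ge t t _ tT); last by rewrite t0 lexx.
by rewrite /phi le_min A_ge0 m_ge0 // t0 lexx.
Qed.

Lemma Th_norm {t : R} : 0 <= t <= T -> `|Th t| <= 2 * C.
Proof.
move=> /andP[t0 tT]; rewrite ger0_norm ?Th_ge0 //; exact: Th_le.
Qed.


Definition Good (a b : R) := forall z w, a < z < b -> a < w < b -> `|h z - h w| < del / 3.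

Lemma h_near {a b c0 z : R} : Good a b -> a < c0 < b -> a < z < b ->
  h c0 - del / 3 <= h z <= h c0 + del / 3.
Proof.
by move=> Gab c0in zin; have := ltW (Gab c0 z c0in zin); rewrite ler_distlC.
Qed.

Lemma hr_near {a b x c0 : R} : Good a b -> 0 <= a -> a < x < b -> a < c0 < b ->
  h c0 - del / 3 <= hr x <= h c0 + del / 3.
Proof.
move=> Gab a0 /andP[ax xb] c0in.
have x0 : 0 <= x := le_trans a0 (ltW ax).
have hz : \forall z \near x^'+, h c0 - del / 3 <= h z <= h c0 + del / 3.
  near=> z; apply: (h_near Gab c0in); apply/andP; split.
    by apply: lt_trans ax _; near: z; exact: nbhs_right_gt.
  by near: z; exact: nbhs_right_lt.
apply/andP; split.
  apply: limr_ge; first exact: h_cvgr.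
  by apply: filterS hz => z /andP[].
apply: limr_le; first exact: h_cvgr.
by apply: filterS hz => z /andP[].
Unshelve. all: by end_near.
Qed.

Lemma ul_lim {s : R} : 0 <= s -> s < T -> del <= lim ((u z - l z) @[z --> s^'+]).
Proof.
move=> s0 sT; apply: limr_ge.
  by apply: is_cvgB; exact: reg_cvgr.
near=> z; apply: del_le; apply/andP; split.
  by apply: le_trans s0 (ltW _); near: z; exact: nbhs_right_gt.
by apply: ltW; near: z; exact: nbhs_right_lt.
Unshelve. all: by end_near.
Qed.

Lemma no_down_up {a b t1 t2 t3 : R} : Good a b -> 0 <= a -> b <= T ->
  a < t1 -> t1 < t2 -> t2 < t3 -> t3 < b ->
  Num.min (Th t1) (Th t3) <= Th t2.
Proof.
move=> Gab a0 bT at1 t12 t23 t3b.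
have t10 : 0 <= t1 by lra.
have t20 : 0 <= t2 by lra.
have t30 : 0 <= t3 by lra.
have t2T : t2 <= T by lra.
have t3T : t3 <= T by lra.
have t1T : t1 <= T by lra.
rewrite leNgt lt_min; apply/negP => /andP[h1 h3].
set th := Th t2 in h1 h3.
have th0 : 0 <= th := Th_ge0 t20 t2T.
have dl : 0 < del := dpos.
have [s /andP[s0 st3] hs] := Th_gt t30 h3.
have t2s : t2 < s.
  rewrite ltNge; apply/negP => st2.
  have p32 : phi s t3 <= phi s t2.
    have mm : m s t3 <= m s t2.
      by apply: m_mono => //; [rewrite s0 st2 | exact: ltW].
    by rewrite /phi le_min ge_min lexx /= ge_min mm orbT.
  have : phi s t2 <= th by apply: Th_ge => //; rewrite s0 st2.
  have := lt_le_trans hs p32; lra.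
have As : th < A s by apply: lt_le_trans hs _; rewrite /phi ge_min lexx.
have [s' /andP[s'0 s't1] hs'] := Th_gt t10 h1.
move: hs'; rewrite /phi lt_min => /andP[As' ms't1].
have ms't2 : m s' t2 <= th.
  rewrite leNgt; apply/negP => H.
  have : th < phi s' t2 by rewrite /phi lt_min As' H.
  have : phi s' t2 <= th by apply: Th_ge => //; rewrite s'0 /=; lra.
  lra.
pose e := Num.min (del / 3) (m s' t1 - th).
have e0 : 0 < e by rewrite /e lt_min; apply/andP; split; lra.
have e1 : e <= del / 3 by rewrite /e ge_min lexx.
have e2 : e <= m s' t1 - th by rewrite /e ge_min lexx orbT.
have s'in : [set` `[s', t2]] s' by rewrite /= in_itv /= lexx /=; lra.
have mlt : m s' t2 < th + e by apply: le_lt_trans ms't2 _; lra.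
have [r] := @inf_img_lt _ _ G (th + e) s' s'in mlt.
rewrite /= in_itv /= => /andP[s'r rt2] Gr.
have t1r : t1 < r.
  rewrite ltNge; apply/negP => rt1.
  have : m s' t1 <= G r by apply: m_le => //; rewrite s'r rt1.
  lra.
have c0in : a < t2 < b by apply/andP; split; lra.
have rin : a < r < b by apply/andP; split; lra.
have sin : a < s < b by apply/andP; split; lra.
have r0 : 0 <= r by lra.
have /andP[hr1 _] := h_near Gab c0in rin.
have /andP[hrr1 _] := hr_near Gab a0 rin c0in.
have Grge : h t2 - del / 3 <= G r.
  rewrite /G le_max le_min; apply/orP; left.
  by rewrite hrE // -/(h r); apply/andP; split; lra.
have /andP[_ hs2] := h_near Gab c0in sin.
have /andP[_ hrs2] := hr_near Gab a0 sin c0in.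
have sT : 0 <= s <= T by apply/andP; split; lra.
have dls := del_le sT.
have ulim := ul_lim s0 (lt_le_trans (proj2 (andP sin)) bT).
rewrite /A lt_max (ltNge th 0) th0 orbF lt_max in As.
case/orP: As => H.
  have : X s - u s = h s - (u s - l s) by rewrite /h; lra.
  lra.
rewrite XuE // in H; lra.
Qed.


Lemma Good_her a b a' b' : a <= a' -> b' <= b -> Good a b -> Good a' b'.
Proof.
move=> aa' b'b Gab z w /andP[az zb] /andP[aw wb]; apply: Gab.
  by apply/andP; split; [exact: le_lt_trans az | exact: lt_le_trans b'b].
by apply/andP; split; [exact: le_lt_trans aw | exact: lt_le_trans b'b].
Qed.

Lemma Good_local x : 0 <= x <= T ->
  exists2 e, 0 < e & Good x (x + e) /\ (0 < x -> Good (x - e) x).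
Proof.
move=> /andP[x0 xT].
have dl : 0 < del := dpos.
have d6 : 0 < del / 6 by lra.
have [d1 d10 H1] := cvg_right_eps (h_cvgr x0) _ d6.
have [d2 d20 H2] : exists2 d2, 0 < d2 & (0 < x -> Good (x - d2) x).
  have [xp|] := ltP 0 x; last first.
    by move=> x0'; exists 1 => // xp; move: (lt_le_trans xp x0'); rewrite ltxx.
  have [d d0 H] := cvg_left_eps (h_cvgl xp) _ d6.
  exists d => // _ z w zin win.
  have := H z zin; have := H w win; rewrite !ltr_distlC => /andP[? ?] /andP[? ?].
  by apply/andP; split; lra.
exists (Num.min d1 d2); first by rewrite lt_min d10 d20.
have m1 : Num.min d1 d2 <= d1 by rewrite ge_min lexx.
have m2 : Num.min d1 d2 <= d2 by rewrite ge_min lexx orbT.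
split.
  move=> z w /andP[xz zx] /andP[xw wx].
  have zin : x < z < x + d1 by rewrite xz /=; lra.
  have win : x < w < x + d1 by rewrite xw /=; lra.
  have := H1 z zin; have := H1 w win; rewrite !ltr_distlC => /andP[? ?] /andP[? ?].
  by apply/andP; split; lra.
move=> xp; apply: (Good_her (x - d2) x) => //; last exact: H2.
by rewrite lerD2l lerN2.
Qed.

Lemma Th_BV : bounded_variation 0 T Th.
Proof.
have [s [cs ls]] := partition_exists T Good (ltW T0) Good_her Good_local.
rewrite -ls; apply: (chain_BV Good Th s 0 cs) => a' b' Gab ab a0 bl.
rewrite ls in bl.
apply: (@piece_BV _ Th a' b' (2 * C)) => //.
  move=> z /andP[az zb]; apply: Th_norm; apply/andP; split.
    exact: le_trans a0 az.
  exact: le_trans zb bl.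
by move=> p q r ap rb pq qr; exact: (no_down_up Gab a0 bl ap pq qr rb).
Qed.

End Bnd.

End Main.


Theorem lemma2 (R : realType) (y l u : R -> R) :
  regulated y -> regulated l -> regulated u ->
  (forall t : R, 0 <= t -> l t <= u t) ->
  l 0 <= y 0 -> y 0 <= u 0 ->
  (forall t : R, 0 <= t -> 0 < inf [set u s - l s | s in `[0, t]]) ->
  has_BV (Theta u l (RP_xi y l)).
Proof.
move=> ry rl ru lu _ _ ul t t0.
have [tp|] := ltP 0 t; last first.
  move=> t0'; have -> : t = 0 by apply/eqP; rewrite eq_le t0' t0.
  exact: bounded_variationxx.
have [C HC] := big_bnd R y l u ry rl ru t tp.
exact: (Th_BV R y l u ry rl ru lu t tp (ul t t0) C HC).
Qed.
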